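(* Let $\theta_1\in[0,2\pi)$, $d\in\mathbb{Z}_+$, $k\in\mathbb{Z}_+$, and let $\alpha=(\alpha_n)_{n\ge0}\in\mathbb{D}^\infty$ satisfy $(S-e^{-i\theta_1})^d\alpha\in\ell^2$ and $\alpha\in\ell^{2d+2}$. If $F\in A_{2k}$ satisfies $L_{2k}(F)\ge 2(d+1)-2k$, then $$\sup_{N}\Big|\sum_{n=0}^N[\phi_{2k}(F)]_n\Big|<\infty .$$
   Context: $\mathbb{D}$ is the open unit disk, $(S\alpha)_n:=\alpha_{n+1}$ is the shift. $A_{2k}:=\mathbb{C}[x_1,y_1,\dots,x_k,y_k]$; $\phi_{2k}$ is the linear map from $A_{2k}$ to complex sequences defined on monomials by $[\phi_{2k}(\prod_{i=1}^k x_i^{\beta_i}y_i^{\gamma_i})]_n=\prod_{i=1}^k\alpha_{n+\beta_i}\overline{\alpha_{n+\gamma_i}}$. The degree function $L_{2k}:A_{2k}\setminus\{0\}\to\mathbb{N}$ is defined as follows: expand $F$ uniquely as $F=\sum_{s=1}^M C_s\prod_{p=1}^k(x_p-e^{-i\theta_1})^{\beta_{p,s}}(y_p-e^{i\theta_1})^{\gamma_{p,s}}$ with $C_s\ne0$, $\beta_{p,s},\gamma_{p,s}\in\mathbb{N}$, and the exponent tuples $(\beta_{p,s},\gamma_{p,s})_{1\le p\le k}$ distinct for distinct $s$ (Taylor expansion at the point $x_p=e^{-i\theta_1}$, $y_p=e^{i\theta_1}$); then $L_{2k}(F):=\min_{1\le s\le M}\sum_{p=1}^k\big(\min(\beta_{p,s},d)+\min(\gamma_{p,s},d)\big)$.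 *)

(* Defs.v *)
From mathcomp Require Import all_boot all_algebra.
From mathcomp Require Import reals trigo.
From mathcomp Require Import complex.
From mathcomp Require Import mpoly.
Set Implicit Arguments. Unset Strict Implicit. Unset Printing Implicit Defensive.
Import GRing.Theory Num.Theory.
Local Open Scope ring_scope.
Local Open Scope complex_scope.

Section Defs.
Variable R : realType.
Local Notation C := R[i].

Definition expi (t : R) : C := cos t +i* sin t.

Definition shift (a : nat -> C) : nat -> C := fun n => a n.+1.

Definition shift_sub_pow (c : C) (d : nat) (a : nat -> C) : nat -> C :=
  iter d (fun b n => shift b n - c * b n) a.

Definition in_lp (p : nat) (a : nat -> C) : Prop :=
  exists M : C, forall N : nat, \sum_(n < N) `|a n| ^+ p <= M.

(* A_{2k} = C[x_1,y_1,...,x_k,y_k] is {mpoly C[k + k]} with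
   x_p = variable (lshift k p) and y_p = variable (rshift k p). *)
Definition xvar k (p : 'I_k) : 'I_(k + k) := lshift k p.
Definition yvar k (p : 'I_k) : 'I_(k + k) := rshift k p.

Definition phi k (alpha : nat -> C) (F : {mpoly C[k + k]}) : nat -> C :=
  fun n => \sum_(m <- msupp F)
     F@_m * \prod_(p < k) (alpha (n + m (xvar p))%N * (alpha (n + m (yvar p))%N)^*).

(* Taylor expansion at x_p = e^{-i theta}, y_p = e^{i theta}:
   the polynomial G with F(X) = G(X - point), i.e. G(Z) = F(Z + point). *)
Definition taylor_point k (theta : R) (i : 'I_(k + k)) : C :=
  match split i with
  | inl _ => expi (- theta)
  | inr _ => expi theta
  end.

Definition taylor_shift k (theta : R) (F : {mpoly C[k + k]}) : {mpoly C[k + k]} :=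
  comp_mpoly [tuple ('X_i + (@taylor_point k theta i)%:MP) | i < k + k] F.

Definition Lweight k (d : nat) (m : 'X_{1..k + k}) : nat :=
  \sum_(p < k) (minn (m (xvar p)) d + minn (m (yvar p)) d).

(* L_{2k}(F): min of weights over the monomials of the Taylor expansion
   (value 0 for F = 0, where L is undefined) *)
Definition L2k k (theta : R) (d : nat) (F : {mpoly C[k + k]}) : nat :=
  match msupp (taylor_shift theta F) with
  | [::] => 0%N
  | m0 :: s => \big[minn/Lweight d m0]_(m <- s) Lweight d m
  end.

End Defs.

(* Main.v *)
Require Import Defs.
From mathcomp Require Import all_boot all_algebra.
From mathcomp Require Import reals trigo.
From mathcomp Require Import complex.
From mathcomp Require Import mpoly.
Import GRing.Theory Num.Theory.
Local Open Scope ring_scope.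
Local Open Scope complex_scope.

From mathcomp Require Import all_order.
From mathcomp Require exp.
From mathcomp Require Import ring lra zify.
From mathcomp.multinomials Require Import ssrcomplements.
Set Implicit Arguments. Unset Strict Implicit. Unset Printing Implicit Defensive.
Import Order.TTheory GRing.Theory Num.Theory.
Local Open Scope ring_scope.
Local Open Scope complex_scope.

Section RealAux.
Variable R : realType.

Definition rt (m : nat) (x : R) : R := exp.powR x (m%:R^-1).

Lemma rt_ge0 m x : 0 <= rt m x.
Proof. exact: exp.powR_ge0. Qed.

Lemma rt_pow m x : (0 < m)%N -> 0 <= x -> rt m x ^+ m = x.
Proof.
move=> m0 x0; rewrite /rt -exp.powR_mulrn ?exp.powR_ge0 // -exp.powRrM.
by rewrite mulVf ?pnatr_eq0 -?lt0n // exp.powRr1.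
Qed.

Lemma rt1 x : 0 <= x -> rt 1 x = x.
Proof. by move=> x0; rewrite -[LHS]expr1 rt_pow. Qed.

Lemma le_1pow (r : R) m : 0 <= r -> (0 < m)%N -> r <= 1 + r ^+ m.
Proof.
move=> r0 m0; case: (lerP r 1) => h.
  by rewrite (le_trans h) // lerDl exprn_ge0.
by rewrite (le_trans (ler_eXnr m0 (ltW h))) // lerDr.
Qed.

Lemma max3 (p q r : R) a b c : 0 <= p -> 0 <= q -> 0 <= r ->
  p ^+ a * q ^+ b * r ^+ c <= p ^+ (a + b + c) + q ^+ (a + b + c) + r ^+ (a + b + c).
Proof.
move=> p0 q0 r0; set M := Num.max p (Num.max q r).
have pM : p <= M by rewrite le_max lexx.
have qM : q <= M by rewrite !le_max lexx orbT.
have rM : r <= M by rewrite !le_max lexx !orbT.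
have M0 : 0 <= M by apply: le_trans pM.
have h1 : p ^+ a * q ^+ b * r ^+ c <= M ^+ (a + b + c).
  rewrite !exprD; apply: ler_pM; rewrite ?mulr_ge0 ?exprn_ge0 //.
    apply: ler_pM; rewrite ?exprn_ge0 //; exact: lerXn2r.
  exact: lerXn2r.
apply: (le_trans h1).
have s0 : forall x : R, 0 <= x -> 0 <= x ^+ (a + b + c) by move=> x x0; rewrite exprn_ge0.
have : M = p \/ M = q \/ M = r.
  by rewrite /M !maxEle; case: ifP => _; [case: ifP => _|]; auto.
case=> [->|[->|->]].
all: by have := s0 p p0; have := s0 q q0; have := s0 r r0; lra.
Qed.

Lemma sum2pow (x y : R) n : 0 <= x -> 0 <= y ->
  (x + y) ^+ n <= 2 ^+ n * (x ^+ n + y ^+ n).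
Proof.
move=> x0 y0; wlog xy : x y x0 y0 / x <= y.
  move=> H; case: (lerP x y) => h; first exact: H.
  by rewrite addrC [x ^+ n + _]addrC H // ltW.
rewrite (@le_trans _ _ ((2 * y) ^+ n)) //.
  by apply: lerXn2r; rewrite ?nnegrE ?addr_ge0 ?mulr_ge0 // mulr2n mulrDl mul1r lerD2r.
by rewrite exprMn ler_pM2l ?exprn_gt0 // lerDr exprn_ge0.
Qed.

Lemma amgm_scaled (x y z s : R) a b c : 0 <= x -> 0 <= y -> 0 <= z ->
  0 < s -> s <= 1 -> (0 < a)%N ->
  x ^+ a * y ^+ b * z ^+ c <=
   (s^-1) ^+ ((b + c) * (a + b + c)) * x ^+ (a + b + c)
   + s * (y ^+ (a + b + c) + z ^+ (a + b + c)).
Proof.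
move=> x0 y0 z0 s0 s1 a0.
set W := (a + b + c)%N.
set l := s^-1 ^+ (b + c); set mu := s ^+ a.
have l0 : 0 <= l by rewrite exprn_ge0 // invr_ge0 ltW.
have mu0 : 0 <= mu by rewrite exprn_ge0 // ltW.
have lm : l ^+ a * mu ^+ (b + c) = 1.
  rewrite /l /mu -(exprM (s^-1)) -(exprM s) exprVn mulnC mulVf //.
  by rewrite expf_eq0 gt_eqF // andbF.
have e : x ^+ a * y ^+ b * z ^+ c = (l * x) ^+ a * (mu * y) ^+ b * (mu * z) ^+ c.
  rewrite !exprMn; transitivity ((l ^+ a * mu ^+ (b + c)) * (x ^+ a * y ^+ b * z ^+ c)).
    by rewrite lm mul1r.
  by rewrite exprD; ring.
have muW : mu ^+ W <= s.
  have hW : (0 < a * W)%N by rewrite muln_gt0 a0 /W !addn_gt0 a0.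
  rewrite /mu -exprM -(prednK hW) exprS.
  by rewrite ler_piMr ?exprn_ile1 // ltW.
have hx : (l * x) ^+ W = (s^-1) ^+ ((b + c) * W) * x ^+ W by rewrite exprMn /l -exprM.
have hm := max3 a b c (mulr_ge0 l0 x0) (mulr_ge0 mu0 y0) (mulr_ge0 mu0 z0).
rewrite e; apply: (le_trans hm).
rewrite -/W hx !exprMn.
have h1 : mu ^+ W * y ^+ W <= s * y ^+ W by rewrite ler_wpM2r ?exprn_ge0.
have h2 : mu ^+ W * z ^+ W <= s * z ^+ W by rewrite ler_wpM2r ?exprn_ge0.
lra.
Qed.

Lemma keyA (X Y : R) q m : 0 <= Y -> Y <= X -> (0 < m)%N ->
  (X ^+ q - Y ^+ q) * Y ^+ m <= q%:R * X ^+ q * (X ^+ m - Y ^+ m).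
Proof.
move=> Y0 YX m0; have X0 : 0 <= X by apply: le_trans YX.
have XY0 : 0 <= X - Y by rewrite subr_ge0.
case: q => [|q]; first by rewrite subrr mul0r mul0r mul0r.
have h1 : X ^+ q.+1 - Y ^+ q.+1 <= (X - Y) * (q.+1%:R * X ^+ q).
  rewrite subrXX ler_wpM2l //.
  have hs : forall i : 'I_q.+1, X ^+ (q.+1.-1 - i) * Y ^+ i <= X ^+ q.
    move=> i; rewrite (le_trans (ler_wpM2l (exprn_ge0 _ X0) (lerXn2r i _ _ YX))) ?nnegrE //.
    by rewrite -exprD subnK // -ltnS.
  rewrite (le_trans (ler_sum _ (fun i _ => hs i))) // sumr_const card_ord.
  by rewrite mulr_natl.
case: m m0 => // m _.
have h2 : (X - Y) * X ^+ m <= X ^+ m.+1 - Y ^+ m.+1.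
  rewrite subrXX ler_wpM2l // big_ord_recl /= subn0 expr0 mulr1 lerDl.
  by apply: sumr_ge0 => i _; rewrite mulr_ge0 ?exprn_ge0.
apply: (le_trans (ler_wpM2r (exprn_ge0 _ Y0) h1)).
apply: (le_trans (ler_wpM2l _ (lerXn2r m.+1 _ _ YX))); rewrite ?nnegrE ?mulr_ge0 ?exprn_ge0 //.
apply: le_trans (ler_wpM2l _ h2); last by rewrite mulr_ge0 ?exprn_ge0.
by rewrite le_eqVlt; apply/orP; left; apply/eqP; rewrite !exprS; ring.
Qed.

End RealAux.

Section NC.
Variable R : realType.
Local Notation C := R[i].

Definition nc (z : C) : R := Normc.normc z.

Lemma normE (z : C) : `|z| = (nc z)%:C.
Proof. by []. Qed.

Lemma nc_ge0 z : 0 <= nc z.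
Proof. by rewrite -ler0c -normE normr_ge0. Qed.

Lemma nc_add (x y : C) : nc (x + y) <= nc x + nc y.
Proof. by rewrite -lecR rmorphD /= -!normE ler_normD. Qed.

Lemma nc_mul (x y : C) : nc (x * y) = nc x * nc y.
Proof. exact: Normc.normcM. Qed.

Lemma nc_opp (x : C) : nc (- x) = nc x.
Proof. by apply: complexI; rewrite -!normE normrN. Qed.

Lemma nc_subC (x y : C) : nc (x - y) = nc (y - x).
Proof. by rewrite -nc_opp opprB. Qed.

Lemma nc_conj (x : C) : nc (x^*) = nc x.
Proof. by case: x => a b; rewrite /nc /= sqrrN. Qed.

Lemma nc_real (x : R) : nc (x%:C) = `|x|.
Proof. by rewrite /nc /= expr0n /= addr0 sqrtr_sqr. Qed.

Lemma nc_sub_ge (x y : C) : nc x - nc y <= nc (x - y).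
Proof. by rewrite lerBlDr -[x in nc x](subrK y) nc_add. Qed.

Lemma mulcJ_nc (z : C) : z * z^* = (nc z ^+ 2)%:C.
Proof.
case: z => a b; rewrite /nc /= sqr_sqrtr ?addr_ge0 ?sqr_ge0 //.
by apply/eqP; rewrite eq_complex /=; apply/andP; split; apply/eqP; ring.
Qed.

Lemma nc_sum (I : Type) (s : seq I) (F : I -> C) :
  nc (\sum_(i <- s) F i) <= \sum_(i <- s) nc (F i).
Proof.
elim: s => [|x s IH]; first by rewrite !big_nil /nc /= expr0n /= addr0 sqrtr0.
by rewrite !big_cons (le_trans (nc_add _ _)) // lerD2l.
Qed.

Lemma nc_prod (I : Type) (s : seq I) (F : I -> C) :
  nc (\prod_(i <- s) F i) = \prod_(i <- s) nc (F i).
Proof.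
elim: s => [|x s IH]; first by rewrite !big_nil /nc /= expr0n /= addr0 expr1n sqrtr1.
by rewrite !big_cons nc_mul IH.
Qed.

Lemma nc_exp (z : C) n : nc (z ^+ n) = nc z ^+ n.
Proof.
elim: n => [|n IH]; first by rewrite !expr0 /nc /= expr0n /= addr0 expr1n sqrtr1.
by rewrite !exprS nc_mul IH.
Qed.

End NC.

Section GI.
Variable R : realType.
Local Notation C := R[i].

Lemma GI (z1 z2 : C) m q : (0 < m)%N ->
  nc ((rt m (nc z1) ^+ q)%:C * z1^* - (rt m (nc z2) ^+ q)%:C * z2^*)
  <= q.+1%:R * (rt m (nc z1) + rt m (nc z2)) ^+ q * nc (z1 - z2).
Proof.
move=> m0.
wlog le21 : z1 z2 / rt m (nc z2) <= rt m (nc z1).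
  move=> H; case: (lerP (rt m (nc z2)) (rt m (nc z1))) => h; first exact: H.
  by rewrite (nc_subC z1 z2) (nc_subC ((rt m (nc z1) ^+ q)%:C * z1^*)) [rt m (nc z1) + _]addrC H // ltW.
set X1 := rt m (nc z1); set X2 := rt m (nc z2).
have X20 : 0 <= X2 by apply: rt_ge0.
have X10 : 0 <= X1 by apply: le_trans le21.
have e1 : X1 ^+ m = nc z1 by rewrite rt_pow ?nc_ge0.
have e2 : X2 ^+ m = nc z2 by rewrite rt_pow ?nc_ge0.
have -> : (X1 ^+ q)%:C * z1^* - (X2 ^+ q)%:C * z2^*
   = (X1 ^+ q)%:C * (z1 - z2)^* + (X1 ^+ q - X2 ^+ q)%:C * z2^*.
  by rewrite rmorphB /= rmorphB /=; ring.
have hq : 0 <= X1 ^+ q - X2 ^+ q by rewrite subr_ge0 lerXn2r.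
apply: (le_trans (nc_add _ _)); rewrite !nc_mul !nc_real !nc_conj.
rewrite ger0_norm ?exprn_ge0 // ger0_norm //.
have hk := @keyA R X1 X2 q m X20 le21 m0; rewrite e1 e2 in hk.
have hs := nc_sub_ge z1 z2.
have h3 : (X1 ^+ q - X2 ^+ q) * nc z2 <= q%:R * X1 ^+ q * nc (z1 - z2).
  apply: le_trans hk _; rewrite ler_wpM2l // mulr_ge0 ?exprn_ge0 //.
have h4 : X1 ^+ q <= (X1 + X2) ^+ q.
  by apply: lerXn2r; rewrite ?nnegrE ?addr_ge0 // lerDl.
have h5 : 0 <= nc (z1 - z2) := nc_ge0 _.
apply: le_trans (_ : q.+1%:R * X1 ^+ q * nc (z1 - z2) <= _).
  by rewrite -addn1 natrD; lra.
by rewrite ler_wpM2r // ler_wpM2l.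
Qed.

End GI.

Section Seq.
Variable R : realType.
Local Notation C := R[i].

Definition delta (b : nat -> C) : nat -> C := fun n => b n.+1 - b n.
Definition Dq (j : nat) (a : nat -> C) : nat -> C := iter j delta a.

Lemma DqS j a n : Dq j.+1 a n = Dq j a n.+1 - Dq j a n.
Proof. by rewrite /Dq iterS. Qed.

Lemma Dq0 a : Dq 0 a = a. Proof. by []. Qed.

Lemma nc_sub (x y : C) : nc (x - y) <= nc x + nc y.
Proof. by rewrite (le_trans (nc_add _ _)) // nc_opp. Qed.

Lemma Dq_bound a (ha : forall n, nc (a n) <= 1) j n : nc (Dq j a n) <= 2 ^+ j.
Proof.
elim: j n => [|j IH] n; first by rewrite expr0 ha.
rewrite DqS (le_trans (nc_sub _ _)) // exprS mulr2n mulrDl mul1r.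
by rewrite lerD.
Qed.

Lemma abel (v g : nat -> C) N :
  \sum_(n < N) (v n.+1 - v n) * g n =
  v N * g N - v 0%N * g 0%N - \sum_(n < N) v n.+1 * (g n.+1 - g n).
Proof.
elim: N => [|N IH]; first by rewrite !big_ord0; ring.
by rewrite !big_ord_recr /= IH; ring.
Qed.

Section GN.
Variables (a : nat -> C) (d : nat).
Hypothesis d0 : (0 < d)%N.
Hypothesis ha : forall n, nc (a n) <= 1.

Definition W := (2 * d + 2)%N.
Definition rho j n := rt (minn j d).+1 (nc (Dq j a n)).
Definition Z j N := \sum_(n < N) rho j n ^+ W.

Lemma rho_ge0 j n : 0 <= rho j n.
Proof. exact: rt_ge0. Qed.

Lemma rho_pow j n : rho j n ^+ (minn j d).+1 = nc (Dq j a n).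
Proof. by rewrite rt_pow ?nc_ge0. Qed.

Lemma rho_bnd j n : rho j n <= 1 + 2 ^+ j.
Proof.
rewrite (le_trans (le_1pow (rho_ge0 j n) (ltn0Sn (minn j d)))) //.
by rewrite lerD2l rho_pow Dq_bound.
Qed.

Lemma Z_ge0 j N : 0 <= Z j N.
Proof. by apply: sumr_ge0 => n _; rewrite exprn_ge0 ?rho_ge0. Qed.

Lemma Z_incr j N : Z j N.+1 <= Z j N + (1 + 2 ^+ j) ^+ W.
Proof.
rewrite /Z big_ord_recr /= lerD2l lerXn2r ?rho_bnd ?nnegrE ?rho_ge0 //.
by rewrite addr_ge0 ?exprn_ge0.
Qed.

Lemma Z_shift j N : \sum_(n < N) rho j n.+1 ^+ W <= Z j N.+1.
Proof. by rewrite /Z big_ord_recl /= lerDr exprn_ge0 ?rho_ge0. Qed.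

Lemma min_small j : (j <= d)%N -> minn j d = j.
Proof. by move=> h; apply/minn_idPl. Qed.


Lemma ehrling j : (j.+2 <= d)%N -> forall eps : R, 0 < eps ->
  exists B K : R, 0 <= K /\ forall N, Z j.+1 N <= B + K * Z j N + eps * Z j.+2 N.
Proof.
move=> hj eps eps0.
set q := (2 * (d - j.+1))%N.
have hmj : minn j d = j by apply: min_small; lia.
have hm1 : minn j.+1 d = j.+1 by apply: min_small; lia.
have hm2 : minn j.+2 d = j.+2 by apply: min_small; lia.
have hW1 : W = (q + j.+2 * 2)%N by rewrite /W /q; lia.
have hW2 : W = (j.+1 + q + j.+3)%N by rewrite /W /q; lia.
set v := Dq j a; set u := Dq j.+1 a; set w := Dq j.+2 a.
pose g n := ((rho j.+1 n) ^+ q)%:C * (u n)^*.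
have hug n : u n * g n = ((rho j.+1 n) ^+ W)%:C.
  rewrite /g mulrCA mulcJ_nc -rmorphM /= -(rho_pow j.+1) hm1 -exprM -exprD -hW1.
  by [].
have hZc N : (Z j.+1 N)%:C =
    v N * g N - v 0%N * g 0%N - \sum_(n < N) v n.+1 * (g n.+1 - g n).
  rewrite -abel /Z rmorph_sum; apply: eq_bigr => n _ /=.
  by have := hug n; rewrite /u DqS => ->.
pose b0 : R := 2 ^+ j * ((1 + 2 ^+ j.+1) ^+ q * 2 ^+ j.+1).
have hbd n : nc (v n) * nc (g n) <= b0.
  rewrite /g nc_mul nc_real nc_conj ger0_norm ?exprn_ge0 ?rho_ge0 //.
  apply: ler_pM; rewrite ?nc_ge0 ?mulr_ge0 ?exprn_ge0 ?rho_ge0 ?nc_ge0 //.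
    exact: Dq_bound.
  apply: ler_pM; rewrite ?exprn_ge0 ?rho_ge0 ?nc_ge0 //.
    by apply: lerXn2r; rewrite ?nnegrE ?rho_ge0 ?rho_bnd // addr_ge0 ?exprn_ge0.
  exact: Dq_bound.
have hgi n : nc (g n.+1 - g n) <=
    q.+1%:R * (rho j.+1 n.+1 + rho j.+1 n) ^+ q * nc (w n).
  by rewrite /g /rho hm1 /w DqS; apply: GI.
have hterm n (s : R) : 0 < s -> s <= 1 ->
  nc (v n.+1) * nc (g n.+1 - g n) <=
    q.+1%:R * ((s^-1) ^+ ((q + j.+3) * W) * rho j n.+1 ^+ W
     + s * (2 ^+ W * (rho j.+1 n.+1 ^+ W + rho j.+1 n ^+ W) + rho j.+2 n ^+ W)).
  move=> s0 s1.
  have ev : nc (v n.+1) = rho j n.+1 ^+ j.+1 by rewrite -(rho_pow j) hmj.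
  have ew : nc (w n) = rho j.+2 n ^+ j.+3 by rewrite -(rho_pow j.+2) hm2.
  set x := rho j n.+1; set Y := rho j.+1 n.+1 + rho j.+1 n; set z := rho j.+2 n.
  have x0 : 0 <= x by apply: rho_ge0.
  have Y0 : 0 <= Y by rewrite addr_ge0 ?rho_ge0.
  have z0 : 0 <= z by apply: rho_ge0.
  apply: (le_trans (ler_wpM2l (nc_ge0 _) (hgi n))).
  rewrite ev ew -/x -/Y -/z.
  have am := @amgm_scaled R x Y z s j.+1 q j.+3 x0 Y0 z0 s0 s1 (ltn0Sn j).
  rewrite -hW2 in am.
  have sp := @sum2pow R (rho j.+1 n.+1) (rho j.+1 n) W (rho_ge0 _ _) (rho_ge0 _ _).
  rewrite -/Y in sp.
  have e : x ^+ j.+1 * (q.+1%:R * Y ^+ q * z ^+ j.+3) =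
           q.+1%:R * (x ^+ j.+1 * Y ^+ q * z ^+ j.+3) by ring.
  rewrite e ler_wpM2l //.
  apply: (le_trans am); rewrite lerD2l.
  by apply: ler_wpM2l; [exact: ltW | rewrite lerD2r].
have hsum (s : R) : 0 < s -> s <= 1 -> forall N,
  Z j.+1 N <= b0 + b0 + q.+1%:R * ((s^-1) ^+ ((q + j.+3) * W) * \sum_(n < N) rho j n.+1 ^+ W
     + s * (2 ^+ W * (\sum_(n < N) rho j.+1 n.+1 ^+ W + Z j.+1 N) + Z j.+2 N)).
  move=> s0 s1 N.
  have eZ : Z j.+1 N = nc ((Z j.+1 N)%:C) by rewrite nc_real ger0_norm ?Z_ge0.
  rewrite {1}eZ hZc.
  have h1 : nc (v N * g N - v 0%N * g 0%N) <= b0 + b0.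
    apply: le_trans (nc_sub _ _) _; rewrite [nc (v N * _)]nc_mul [nc (v 0%N * _)]nc_mul.
    exact: lerD (hbd N) (hbd 0%N).
  have h2 : nc (\sum_(n < N) v n.+1 * (g n.+1 - g n)) <=
      q.+1%:R * ((s^-1) ^+ ((q + j.+3) * W) * \sum_(n < N) rho j n.+1 ^+ W
     + s * (2 ^+ W * (\sum_(n < N) rho j.+1 n.+1 ^+ W + Z j.+1 N) + Z j.+2 N)).
    apply: (le_trans (nc_sum _ _)).
    rewrite (eq_bigr (fun n : 'I_N => nc (v n.+1) * nc (g n.+1 - g n))); last first.
      by move=> n _; rewrite nc_mul.
    apply: le_trans (ler_sum _ (fun (n : 'I_N) _ => hterm n s s0 s1)) _.
    rewrite le_eqVlt; apply/orP; left; apply/eqP.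
    rewrite -mulr_sumr /Z; congr (_ * _).
    rewrite big_split /=.
    rewrite -[X in X + _ = _]mulr_sumr -[X in _ + X = _]mulr_sumr; congr (_ + _); congr (_ * _).
    by rewrite big_split /= -mulr_sumr big_split.
  exact: le_trans (nc_sub _ _) (lerD h1 h2).
pose s : R := Num.min 1 (Num.min (eps / (2 * q.+1%:R)) (1 / (4 * q.+1%:R * 2 ^+ W))).
have q0 : 0 < q.+1%:R :> R by rewrite ltr0n.
have W0 : 0 < 2 ^+ W :> R by rewrite exprn_gt0.
have s0 : 0 < s by rewrite !lt_min ltr01 !divr_gt0 ?mulr_gt0 ?ltr0n.
have s1 : s <= 1 by rewrite ge_min lexx.
have s2 : q.+1%:R * s <= eps / 2.
  have : s <= eps / (2 * q.+1%:R) by rewrite /s !ge_min lexx !orbT.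
  rewrite ler_pdivlMr ?mulr_gt0 ?ltr0n // => h.
  by rewrite ler_pdivlMr ?ltr0n // mulrC mulrA; lra.
have s3 : q.+1%:R * s * 2 ^+ W <= 1 / 4.
  have : s <= 1 / (4 * q.+1%:R * 2 ^+ W) by rewrite /s !ge_min lexx !orbT.
  rewrite ler_pdivlMr ?mulr_gt0 ?ltr0n // => h.
  by rewrite ler_pdivlMr ?ltr0n //; lra.
set K := (s^-1) ^+ ((q + j.+3) * W).
have K0 : 0 <= K by rewrite exprn_ge0 // invr_ge0 ltW.
exists (2 * (b0 + b0 + q.+1%:R * K * (1 + 2 ^+ j) ^+ W + q.+1%:R * s * 2 ^+ W * (1 + 2 ^+ j.+1) ^+ W)).
exists (2 * (q.+1%:R * K)); split; first by rewrite mulr_ge0 ?mulr_ge0 ?ler0n.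
move=> N.
have hs := hsum s s0 s1 N; rewrite -/K in hs.
have hx : \sum_(n < N) rho j n.+1 ^+ W <= Z j N + (1 + 2 ^+ j) ^+ W.
  exact: le_trans (Z_shift _ _) (Z_incr _ _).
have hy : \sum_(n < N) rho j.+1 n.+1 ^+ W <= Z j.+1 N + (1 + 2 ^+ j.+1) ^+ W.
  exact: le_trans (Z_shift _ _) (Z_incr _ _).
have Z1 := Z_ge0 j.+1 N; have Z2 := Z_ge0 j.+2 N; have Z0 := Z_ge0 j N.
have f1 : q.+1%:R * K * \sum_(n < N) rho j n.+1 ^+ W <= q.+1%:R * K * (Z j N + (1 + 2 ^+ j) ^+ W).
  by rewrite ler_wpM2l // mulr_ge0 // ltW.
have f2 : q.+1%:R * s * 2 ^+ W * \sum_(n < N) rho j.+1 n.+1 ^+ W <=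
          q.+1%:R * s * 2 ^+ W * (Z j.+1 N + (1 + 2 ^+ j.+1) ^+ W).
  by rewrite ler_wpM2l // !mulr_ge0 // ltW.
have f3 : q.+1%:R * s * 2 ^+ W * Z j.+1 N <= 1 / 4 * Z j.+1 N by rewrite ler_wpM2r.
have f4 : q.+1%:R * s * Z j.+2 N <= eps / 2 * Z j.+2 N by rewrite ler_wpM2r.
lra.
Qed.


Hypothesis hZ0 : exists M, forall N, \sum_(n < N) nc (a n) ^+ W <= M.
Hypothesis hZd : exists M, forall N, \sum_(n < N) nc (Dq d a n) ^+ 2 <= M.

Lemma eqle (x y : R) : x = y -> x <= y. Proof. by move->. Qed.

Lemma Zb0 : exists M, forall N, Z 0 N <= M.
Proof.
case: hZ0 => M hM; exists M => N; apply: le_trans (hM N).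
rewrite /Z /rho min0n; apply: eqle; apply: eq_bigr => n _; by rewrite rt1 ?nc_ge0.
Qed.

Definition S2 e N := \sum_(n < N) nc (Dq e a n) ^+ 2.

Lemma ZS2 e N : (d <= e)%N -> Z e N = S2 e N.
Proof.
move=> de; apply: eq_bigr => n _.
have -> : W = ((minn e d).+1 * 2)%N by rewrite /W (minn_idPr de); lia.
by rewrite exprM rho_pow.
Qed.

Lemma Zbig i : exists M, forall N, Z (d + i) N <= M.
Proof.
elim: i => [|i [M hM]].
  case: hZd => M hM; exists M => N; rewrite addn0 ZS2 ?leqnn //; exact: hM.
exists (4 * (M + M)) => N.
have hM' : forall N, S2 (d + i) N <= M by move=> N'; rewrite -ZS2 ?leq_addr.
rewrite ZS2 ?leq_addr // /S2.
have e : forall n, nc (Dq (d + i.+1) a n) ^+ 2 <=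
   2 ^+ 2 * (nc (Dq (d + i) a n.+1) ^+ 2 + nc (Dq (d + i) a n) ^+ 2).
  move=> n; rewrite addnS DqS.
  apply: le_trans (sum2pow 2 (nc_ge0 _) (nc_ge0 _)).
  by apply: lerXn2r; rewrite ?nnegrE ?nc_ge0 ?addr_ge0 ?nc_ge0 // nc_sub.
apply: le_trans (ler_sum _ (fun (n : 'I_N) _ => e n)) _.
rewrite -mulr_sumr big_split /= (_ : 2 ^+ 2 = 4 :> R); last by ring.
apply: ler_wpM2l => //.
apply: lerD; last exact: hM'.
apply: le_trans (hM' N.+1); rewrite /S2 big_ord_recl /= lerDr exprn_ge0 ?nc_ge0 //.
Qed.

Lemma chainP i : (i < d)%N -> exists D E : R, 0 <= E /\
  forall N, Z (d - i) N <= D + E * Z (d - i).-1 N.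
Proof.
elim: i => [|i IH] hi.
  case: hZd => M hM; exists M, 0; split => // N.
  rewrite mul0r addr0 subn0 ZS2 ?leqnn //; exact: hM.
case: (IH (ltnW hi)) => D' [E' [E0 hE]].
set j := (d - i.+2)%N.
have e1 : (d - i.+1 = j.+1)%N by rewrite /j; lia.
have e2 : (d - i = j.+2)%N by rewrite /j; lia.
rewrite e1 /=; rewrite e2 /= in hE.
have hj : (j.+2 <= d)%N by rewrite /j; lia.
pose eps : R := (2 * (E' + 1))^-1.
have eps0 : 0 < eps by rewrite invr_gt0 mulr_gt0 // ltr_pwDr.
have epsE : eps * E' <= 1 / 2.
  rewrite /eps mulrC ler_pdivrMr ?mulr_gt0 ?ltr_pwDr //.
  lra.
case: (ehrling hj eps0) => B [K [K0 hBK]].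
exists (2 * (B + eps * D')), (2 * K); split; first by rewrite mulr_ge0.
move=> N; have h1 := hBK N; have h2 := hE N.
have Z1 := Z_ge0 j.+1 N; have Z0 := Z_ge0 j N.
have f : eps * (E' * Z j.+1 N) <= 1 / 2 * Z j.+1 N.
  by rewrite mulrA ler_wpM2r.
have f2 : eps * Z j.+2 N <= eps * (D' + E' * Z j.+1 N) by rewrite ler_wpM2l // ltW.
lra.
Qed.

Lemma Zb j : exists M, forall N, Z j N <= M.
Proof.
case: (leqP j d) => hjd; last first.
  by have := Zbig (j - d); rewrite subnKC // ltnW.
elim: j hjd => [|j IH] hjd; first exact: Zb0.
case: (IH (ltnW hjd)) => M hM.
have hi : (d - j.+1 < d)%N by lia.
case: (chainP hi) => D [E [E0 hE]].
have e : (d - (d - j.+1) = j.+1)%N by lia.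
rewrite e /= in hE.
exists (D + E * M) => N; apply: le_trans (hE N) _.
by rewrite lerD2l ler_wpM2l.
Qed.

Lemma powsum K (x : 'I_K -> R) : (forall i, 0 <= x i) ->
  (\sum_i x i) ^+ W <= 2 ^+ (W * K) * \sum_i x i ^+ W.
Proof.
have W0 : (0 < W)%N by rewrite /W; lia.
elim: K x => [|K IH] x x0.
  by rewrite !big_ord0 expr0n gtn_eqF // mulr0.
rewrite !big_ord_recl.
have S0 : 0 <= \sum_(i < K) x (lift ord0 i) by apply: sumr_ge0 => i _.
have hh := sum2pow W (x0 ord0) S0.
apply: le_trans; first exact: hh.
have h := IH (fun i => x (lift ord0 i)) (fun i => x0 _).
have s0 : 0 <= \sum_(i < K) x (lift ord0 i) ^+ W by apply: sumr_ge0 => i _; rewrite exprn_ge0.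
have p1 : 2 ^+ W <= 2 ^+ (W * K.+1) :> R.
  by rewrite ler_eXn2l ?ltr1n //; lia.
have p2 : 2 ^+ W * 2 ^+ (W * K) = 2 ^+ (W * K.+1) :> R.
  by rewrite -exprD mulnS.
have xw : 0 <= x ord0 ^+ W by rewrite exprn_ge0.
have f1 : 2 ^+ W * x ord0 ^+ W <= 2 ^+ (W * K.+1) * x ord0 ^+ W by rewrite ler_wpM2r.
have f2 : 2 ^+ W * (\sum_(i < K) x (lift ord0 i)) ^+ W <=
          2 ^+ W * (2 ^+ (W * K) * \sum_(i < K) x (lift ord0 i) ^+ W).
  by rewrite ler_wpM2l ?exprn_ge0.
rewrite mulrA p2 in f2.
by rewrite !mulrDr; apply: lerD.
Qed.

Lemma sumZb K (f : 'I_K -> nat) : exists M, forall N, \sum_i Z (f i) N <= M.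
Proof.
elim: K f => [|K IH] f; first by exists 0 => N; rewrite big_ord0.
case: (IH (fun i => f (lift ord0 i))) => M hM.
case: (Zb (f ord0)) => M0 hM0.
exists (M0 + M) => N; rewrite big_ord_recl; exact: lerD.
Qed.

Lemma prod_bound K (e : 'I_K -> nat) : (W <= \sum_i (minn (e i) d).+1)%N ->
  exists M, forall N, \sum_(n < N) \prod_(i < K) nc (Dq (e i) a n) <= M.
Proof.
move=> hW.
set T : R := \sum_(i < K) (1 + 2 ^+ e i).
have T0 : 0 <= T by apply: sumr_ge0 => i _; rewrite addr_ge0 ?exprn_ge0.
set L := (\sum_i (minn (e i) d).+1 - W)%N.
case: (sumZb e) => M hM.
exists (T ^+ L * 2 ^+ (W * K) * M) => N.
have hn : forall n, \prod_(i < K) nc (Dq (e i) a n) <=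
   T ^+ L * 2 ^+ (W * K) * \sum_i rho (e i) n ^+ W.
  move=> n; set S := \sum_(i < K) rho (e i) n.
  have S0 : 0 <= S by apply: sumr_ge0 => i _; apply: rho_ge0.
  have ST : S <= T by apply: ler_sum => i _; apply: rho_bnd.
  have h1 : \prod_(i < K) nc (Dq (e i) a n) <= \prod_(i < K) S ^+ (minn (e i) d).+1.
    apply: ler_prod => i _; apply/andP; split; first exact: nc_ge0.
    rewrite -rho_pow.
    apply: lerXn2r; rewrite ?nnegrE ?rho_ge0 //.
    by rewrite /S (bigD1 i) //= lerDl sumr_ge0 // => j _; apply: rho_ge0.
  apply: (le_trans h1); rewrite prodrXr -(subnK hW) -/L exprD -mulrA.
  apply: ler_pM.
  - exact: exprn_ge0 S0.
  - exact: exprn_ge0 S0.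
  - by apply: lerXn2r; rewrite ?nnegrE.
  - exact: powsum (fun i => rho_ge0 _ _).
apply: le_trans (ler_sum _ (fun (n : 'I_N) _ => hn n)) _.
rewrite -mulr_sumr ler_wpM2l ?mulr_ge0 ?exprn_ge0 //.
rewrite exchange_big /=; exact: hM.
Qed.

End GN.
End Seq.

Section Lam.
Variables (R0 : comNzRingType) (K : nat).
Implicit Types (P Q : {mpoly R0[K]}) (T : 'X_{1..K} -> R0).

Definition Lam T P := \sum_(m <- msupp P) P@_m * T m.

Lemma LamE T P w : (msize P <= w)%N ->
  Lam T P = \sum_(m : 'X_{1..K < w}) P@_m * T m.
Proof.
move=> le_pi; set I : subFinType _ := 'X_{1..K < w}.
rewrite /Lam (big_mksub I) ?msupp_uniq //=; first last.
  by move=> x /msize_mdeg_lt /leq_trans; apply.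
rewrite big_rmcond //= => j /memN_msupp_eq0 ->.
by rewrite mul0r.
Qed.

Lemma LamD T P Q : Lam T (P + Q) = Lam T P + Lam T Q.
Proof.
pose w := (maxn (msize P) (msize Q)).+1.
have hP : (msize P <= w)%N by rewrite leqW // leq_maxl.
have hQ : (msize Q <= w)%N by rewrite leqW // leq_maxr.
have hPQ : (msize (P + Q) <= w)%N by rewrite (leq_trans (msizeD_le _ _)) // leqW.
rewrite !(LamE _ hP) !(LamE _ hQ) (LamE _ hPQ) -big_split /=.
by apply: eq_bigr => m _; rewrite mcoeffD mulrDl.
Qed.

Lemma LamZ T c P : Lam T (c *: P) = c * Lam T P.
Proof.
pose w := (msize P).+1.
have hP : (msize P <= w)%N by rewrite leqW.
have hcP : (msize (c *: P) <= w)%N by rewrite (leq_trans (msizeZ_le _ _)).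
rewrite (LamE _ hP) (LamE _ hcP) mulr_sumr.
by apply: eq_bigr => m _; rewrite mcoeffZ mulrA.
Qed.

Lemma Lam0 T : Lam T 0 = 0.
Proof. by rewrite /Lam msupp0 big_nil. Qed.

Lemma Lam_sum T (I : Type) (s : seq I) (F : I -> {mpoly R0[K]}) :
  Lam T (\sum_(i <- s) F i) = \sum_(i <- s) Lam T (F i).
Proof.
elim: s => [|x s IH]; first by rewrite !big_nil Lam0.
by rewrite !big_cons LamD IH.
Qed.

Lemma Lam1 T : Lam T 1 = T 0%MM.
Proof. by rewrite /Lam msupp1 big_seq1 mcoeff1 eqxx mul1r. Qed.

Lemma eq_Lam T1 T2 P : T1 =1 T2 -> Lam T1 P = Lam T2 P.
Proof. by move=> e; apply: eq_bigr => m _; rewrite e. Qed.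

Lemma Lam_linT T1 T2 c P :
  Lam (fun m => T1 m - c * T2 m) P = Lam T1 P - c * Lam T2 P.
Proof.
rewrite /Lam mulr_sumr -sumrB; apply: eq_bigr => m _; ring.
Qed.

Lemma LamMX T P (i : 'I_K) :
  Lam T (P * 'X_i) = Lam (fun m => T (m + U_(i))%MM) P.
Proof.
rewrite /Lam (perm_big _ (msuppMX P U_(i))) big_map.
apply: eq_bigr => m _; rewrite mcoeffMX addmC //.
Qed.

Lemma LamB T P Q : Lam T (P - Q) = Lam T P - Lam T Q.
Proof. by rewrite LamD -scaleN1r LamZ mulN1r. Qed.

Definition Tp (t : 'I_K -> nat -> R0) (m : 'X_{1..K}) := \prod_(i < K) t i (m i).
Definition dlt (c : R0) (f : nat -> R0) : nat -> R0 := fun j => f j.+1 - c * f j.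
Definition hX (pt : 'I_K -> R0) (i : 'I_K) : {mpoly R0[K]} := 'X_i - (pt i)%:MP.

Lemma Tp_step t i c m : Tp t (m + U_(i))%MM - c * Tp t m =
  Tp (fun j => if j == i then dlt c (t i) else t j) m.
Proof.
rewrite /Tp (bigD1 i) //= [X in _ - c * X](bigD1 i) //= [RHS](bigD1 i) //= eqxx.
have e1 : \prod_(j < K | j != i) t j ((m + U_(i))%MM j) = \prod_(j < K | j != i) t j (m j).
  by apply: eq_bigr => j hj; rewrite mnmDE mnm1E eq_sym (negbTE hj) addn0.
have e2 : \prod_(j < K | j != i) (if j == i then dlt c (t i) else t j) (m j)
        = \prod_(j < K | j != i) t j (m j).
  by apply: eq_bigr => j hj; rewrite (negbTE hj).
by rewrite e1 e2 mnmDE mnm1E eqxx addn1 /dlt; ring.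
Qed.

Lemma Lam_prod pt m t : Lam (Tp t) (mmap1 (hX pt) m) =
  \prod_(i < K) iter (m i) (dlt (pt i)) (t i) 0%N.
Proof.
move: {2}(mdeg m) (erefl (mdeg m)) => s; elim: s m t => [|s IH] m t hs.
  have m0 : m = 0%MM by apply/eqP; rewrite -mdeg_eq0 hs.
  rewrite m0 mmap11 Lam1 /Tp; apply: eq_bigr => i _; by rewrite mnm0E.
have [i hi] : exists i, (0 < m i)%N.
  case: (pickP (fun i => (0 < m i)%N)) => [i hi | h]; first by exists i.
  move: hs; rewrite mdegE big1 // => j _; move: (h j) => /=.
  by case: (m j).
set m' := (m - U_(i))%MM.
have em : m = (m' + U_(i))%MM.
  rewrite submK //; apply/mnm_lepP => j; rewrite mnm1E.
  by case: eqP => [<-|].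
have hs' : mdeg m' = s by move: hs; rewrite em mdegD mdeg1 addn1 => -[].
rewrite em commr_mmap1_M; last by move=> j x; apply: mulrC.
rewrite mmap1U /hX mulrBr [_ * (pt i)%:MP]mulrC mul_mpolyC LamB LamMX LamZ.
rewrite -Lam_linT (eq_Lam _ (fun m0 => Tp_step t i (pt i) m0)) IH //.
apply: eq_bigr => j _; rewrite mnmDE mnm1E.
case: (eqVneq j i) => [->|hji]; first by rewrite ?eqxx addn1 iterSr.
by rewrite ?(eq_sym i) ?(negbTE hji) ?addn0.
Qed.

End Lam.

Section Comp.
Variables (R0 : comNzRingType) (K : nat).

Lemma comp_comp (k' : nat) (lp : K.-tuple {mpoly R0[K]}) (lq : K.-tuple {mpoly R0[k']})
  (P : {mpoly R0[K]}) :
  (P \mPo lp) \mPo lq = P \mPo [tuple (tnth lp i) \mPo lq | i < K].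
Proof.
rewrite (comp_mpolyE P lp) (comp_mpolyE P) raddf_sum /=; apply: eq_bigr => m _.
rewrite comp_mpolyZ rmorph_prod; congr (_ *: _); apply: eq_bigr => i _.
by rewrite rmorphXn tnth_mktuple.
Qed.

Lemma taylor_inv (pt : 'I_K -> R0) (P : {mpoly R0[K]}) :
  (P \mPo [tuple ('X_i + (pt i)%:MP) | i < K]) \mPo [tuple hX pt i | i < K] = P.
Proof.
rewrite comp_comp -[RHS](comp_mpoly_id P); congr (_ \mPo _).
apply: eq_from_tnth => i; rewrite !tnth_mktuple comp_mpolyD comp_mpolyXU comp_mpolyC.
by rewrite -tnth_nth tnth_mktuple /hX subrK.
Qed.

Lemma expansion (pt : 'I_K -> R0) (P : {mpoly R0[K]}) :
  let G := P \mPo [tuple ('X_i + (pt i)%:MP) | i < K] in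
  P = \sum_(m <- msupp G) G@_m *: mmap1 (hX pt) m.
Proof.
move=> G; rewrite -{1}(taylor_inv pt P) -/G comp_mpolyE; apply: eq_bigr => m _.
by congr (_ *: _); apply: eq_bigr => i _; rewrite tnth_mktuple.
Qed.

End Comp.


Section Main.
Variable R : realType.
Local Notation C := R[i].

Lemma nc_expi (t : R) : nc (expi t) = 1.
Proof. by rewrite /nc /expi /= cos2Dsin2 sqrtr1. Qed.

Lemma expi_conj (t : R) : expi t = (expi (- t))^*.
Proof. by rewrite /expi /= cosN sinN opprK. Qed.

Lemma ssp_iter (c : C) j (al : nat -> C) n l :
  iter j (dlt c) (fun l => al (n + l)%N) l = shift_sub_pow c j al (n + l).
Proof.
elim: j l => [|j IH] l //.
by rewrite iterS /dlt !IH /shift_sub_pow iterS /shift addnS.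
Qed.

Lemma ssp_iterC (c : C) j (al : nat -> C) n l :
  iter j (dlt c^*) (fun l => (al (n + l)%N)^*) l = (shift_sub_pow c j al (n + l))^*.
Proof.
elim: j l => [|j IH] l //.
by rewrite iterS /dlt !IH /shift_sub_pow iterS /shift addnS rmorphB rmorphM.
Qed.

Lemma ssp_D (c : C) (hc : nc c = 1) (al : nat -> C) j n :
  shift_sub_pow c j al n = c ^+ (n + j) * Dq j (fun n => c^* ^+ n * al n) n.
Proof.
elim: j n => [|j IH] n.
  rewrite addn0 /= mulrA -exprMn mulcJ_nc hc expr1n expr1n mul1r //.
rewrite /shift_sub_pow iterS /shift -!/(shift_sub_pow _ _ _ _) !IH DqS.
by rewrite !addnS !exprS; ring.
Qed.

Definition tt k (al : nat -> C) n : 'I_(k + k) -> nat -> C := fun i =>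
  match split i with
  | inl _ => fun l => al (n + l)%N
  | inr _ => fun l => (al (n + l)%N)^*
  end.

Lemma phi_Lam k (al : nat -> C) (F : {mpoly C[k + k]}) n :
  phi al F n = Lam (Tp (tt al n)) F.
Proof.
rewrite /phi /Lam; apply: eq_bigr => m _; congr (_ * _).
rewrite /Tp big_split_ord /= -big_split /=; apply: eq_bigr => p _.
by rewrite /tt /xvar /yvar (unsplitK (inl p : 'I_k + 'I_k)) (unsplitK (inr p : 'I_k + 'I_k)).
Qed.

Lemma phi_expand k (theta : R) (al : nat -> C) (F : {mpoly C[k + k]}) n :
  phi al F n = \sum_(m <- msupp (taylor_shift theta F))
     (taylor_shift theta F)@_m *
     \prod_(i < k + k) iter (m i) (dlt (taylor_point theta i)) (tt al n i) 0%N.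
Proof.
rewrite phi_Lam; have := expansion (taylor_point theta) F => /= e.
rewrite {1}e Lam_sum /taylor_shift; apply: eq_bigr => m _.
by rewrite LamZ Lam_prod.
Qed.

Lemma nc_term k (theta : R) (al : nat -> C) n j (i : 'I_(k + k)) :
  nc (iter j (dlt (taylor_point theta i)) (tt al n i) 0%N) =
  nc (Dq j (fun n => (expi (- theta))^* ^+ n * al n) n).
Proof.
rewrite /taylor_point /tt; case: (split i) => p /=.
  by rewrite ssp_iter addn0 ssp_D ?nc_expi // nc_mul nc_exp nc_expi expr1n mul1r.
rewrite (expi_conj theta).
have := ssp_iterC (expi (- theta)) j al n 0%N.
rewrite addn0 => ->.
rewrite nc_conj ssp_D ?nc_expi //.
by rewrite nc_mul nc_exp nc_expi expr1n mul1r.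
Qed.

Lemma bigmin_le (X : Type) (f : X -> nat) x0 (s : seq X) y :
  y \in [seq f x | x <- x0 :: s] ->
  (\big[minn/f x0]_(x <- s) f x <= y)%N.
Proof.
elim: s => [|x s IH] /= hy.
  by move: hy; rewrite big_nil inE => /eqP ->.
rewrite big_cons geq_min; move: hy; rewrite !inE => /or3P [e|e|hy].
- by apply/orP; right; apply: IH; rewrite inE e.
- by apply/orP; left; rewrite (eqP e).
- by apply/orP; right; apply: IH; rewrite inE hy orbT.
Qed.

Lemma Lweight_sum k d (m : 'X_{1..k + k}) :
  Lweight d m = (\sum_(i < k + k) minn (m i) d)%N.
Proof. by rewrite /Lweight big_split_ord big_split. Qed.

Lemma sumS K (f : 'I_K -> nat) : (\sum_(i < K) (f i).+1 = \sum_(i < K) f i + K)%N.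
Proof.
rewrite (eq_bigr (fun i => f i + 1)%N) ?big_split /= ?sum1_card ?card_ord //.
by move=> i _; rewrite addn1.
Qed.

Lemma list_bound (X : eqType) (s : seq X) (cf : X -> R) (f : X -> nat -> R) :
  (forall x, 0 <= cf x) ->
  (forall x, x \in s -> exists M, forall N, f x N <= M) ->
  exists M, forall N, \sum_(x <- s) cf x * f x N <= M.
Proof.
move=> c0; elim: s => [|x s IH] h; first by exists 0 => N; rewrite big_nil.
have [M1 hM1] := h x (mem_head _ _).
have [M2 hM2] : exists M, forall N, \sum_(x <- s) cf x * f x N <= M.
  by apply: IH => y hy; apply: h; rewrite inE hy orbT.
exists (cf x * M1 + M2) => N; rewrite big_cons; apply: lerD => //.
by rewrite ler_wpM2l.
Qed.

Lemma in_lp_R p (b : nat -> C) : in_lp p b ->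
  exists M : R, forall N, \sum_(n < N) nc (b n) ^+ p <= M.
Proof.
case=> M hM; exists (complex.Re M) => N; have := hM N.
have -> : \sum_(n < N) `|b n| ^+ p = (\sum_(n < N) nc (b n) ^+ p)%:C.
  by rewrite rmorph_sum; apply: eq_bigr => n _; rewrite normE rmorphXn.
by rewrite lecE => /andP [_].
Qed.

End Main.

Unset Implicit Arguments.

Theorem lemma15 (R : realType) (theta : R) (d k : nat) (alpha : nat -> R[i])
  (F : {mpoly R[i][k + k]}) :
  0 <= theta < 2 * pi ->
  (0 < d)%N -> (0 < k)%N ->
  (forall n, `|alpha n| < 1) ->
  in_lp 2 (shift_sub_pow (expi (- theta)) d alpha) ->
  in_lp (2 * d + 2) alpha ->
  F != 0 ->
  ((2 * (d + 1))%:Z - (2 * k)%:Z <= (L2k theta d F)%:Z)%R ->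
  exists M : R[i], forall N : nat, `|\sum_(n < N.+1) phi alpha F n| <= M.
Proof.
move=> _ d0 _ hal hd hW0 _ hL.
pose c := expi (- theta).
pose a := fun n => c^* ^+ n * alpha n.
have hc : nc c = 1 := nc_expi _.
have hca n : nc (a n) = nc (alpha n) by rewrite /a nc_mul nc_exp nc_conj hc expr1n mul1r.
have ha n : nc (a n) <= 1.
  rewrite hca; have := hal n; rewrite normE -[X in _ < X]/(1%:C) ltcR => h.
  exact: ltW.
have hZ0 : exists M, forall N, \sum_(n < N) nc (a n) ^+ W d <= M.
  have [M hM] := in_lp_R hW0; exists M => N; apply: le_trans (hM N).
  by apply: eqle; apply: eq_bigr => n _; rewrite hca.
have hZd : exists M, forall N, \sum_(n < N) nc (Dq d a n) ^+ 2 <= M.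
  have [M hM] := in_lp_R hd; exists M => N; apply: le_trans (hM N).
  by apply: eqle; apply: eq_bigr => n _; rewrite ssp_D // nc_mul nc_exp hc expr1n mul1r.
set G := taylor_shift theta F.
have hwt : forall m, m \in msupp G -> (W d <= \sum_(i < k + k) (minn (m i) d).+1)%N.
  move=> m hm; rewrite sumS -Lweight_sum.
  have hLm : (L2k theta d F <= Lweight d m)%N.
    rewrite /L2k -/G; move: hm; case: (msupp G) => [|m0 s] //= hm.
    by apply: bigmin_le; rewrite map_f.
  rewrite /W; lia.
have key : forall m, m \in msupp G -> exists M, forall N,
    \sum_(n < N) \prod_(i < k + k) nc (Dq (m i) a n) <= M.
  by move=> m hm; apply: (prod_bound d0 ha hZ0 hZd (e := fun i => m i)); apply: hwt.
have [M hM] := list_bound (fun m => nc_ge0 (G@_m)) key.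
exists (M%:C) => N; rewrite normE lecR.
apply: le_trans (nc_sum _ _) _.
apply: le_trans (hM N.+1).
have hn : forall n, nc (phi alpha F n) <=
    \sum_(m <- msupp G) nc (G@_m) * \prod_(i < k + k) nc (Dq (m i) a n).
  move=> n; rewrite (phi_expand theta) -/G.
  apply: le_trans (nc_sum _ _) _; apply: eqle; apply: eq_bigr => m _.
  by rewrite nc_mul nc_prod; congr (_ * _); apply: eq_bigr => i _; rewrite nc_term.
apply: le_trans (ler_sum _ (fun (n : 'I_N.+1) _ => hn n)) _.
rewrite exchange_big /=; apply: eqle; apply: eq_bigr => m _.
by rewrite mulr_sumr.
Qed.
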